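(* Let $k$ be a field and $d\in\mathbb{N}$. Consider the morphisms $$\mathrm{d}\beta_d:Q_d\times\mathcal{L}\mathbb{G}_m\times A_d\times\mathcal{L}\mathbb{A}^1\to Q_d\times\mathcal{L}\mathbb{G}_m\times\mathcal{L}\mathbb{A}^1,\quad (q,u,a,v)\mapsto(q,u,ua+qv),$$ $$\alpha_d:Q_d\times A_d\times\mathcal{L}\mathbb{A}^1\to Q_d\times\mathcal{L}\mathbb{A}^1,\quad (q,a,v)\mapsto(q,qv+a).$$ Both are surjective on $k$-points and induce formally smooth morphisms on formal completions at $k$-points. At $k$-points lying over $q=t^d$, they induce isomorphisms on formal completions.
   Context: $Q_d$ is the affine space of monic polynomials of degree $d$ in $R[t]$; $A_d$ is the $d$-dimensional affine space of polynomials of degree $<d$ in $R[t]$; $\mathcal{L}\mathbb{A}^1$ represents $R\mapsto R[[t]]$; $\mathcal{L}\mathbb{G}_m$ represents $R\mapsto R[[t]]^\times$. Formal smoothness refers to the infinitesimal lifting property for Artinian local $k$-algebras. *)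

(* Defs.v *)
From HB Require Import structures.
From mathcomp Require Import all_boot all_order all_algebra.
Set Implicit Arguments. Unset Strict Implicit. Unset Printing Implicit Defensive.
Import GRing.Theory.
Local Open Scope ring_scope.

(* Functors of points on commutative rings, given as a carrier, a         *)
(* predicate cutting out the actual points, and base change along a map.  *)
Record pfun := PFun {
  pt : comNzRingType -> Type;
  ok : forall R : comNzRingType, pt R -> Prop;
  bc : forall R S : comNzRingType, (R -> S) -> pt R -> pt S }.

(* Artinian local k-algebras with residue field k, presented as a        *)
(* finite-dimensional k-algebra A with a k-algebra map eps : A -> k       *)
(* (the residue map) whose kernel (the maximal ideal) is nil.             *)
Definition art_k (k : fieldType) (A : comAlgType k) (eps : A -> k) : Prop :=
  [/\ (forall a b : A, eps (a + b) = eps a + eps b) /\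
      (forall a b : A, eps (a * b) = eps a * eps b),
      eps 1 = 1,
      (forall (c : k) (a : A), eps (c *: a) = c * eps a),
      (forall a : A, eps a = 0 -> exists n : nat, a ^+ n = 0) &
      (exists s : seq A, forall a : A,
          exists cs : seq k, a = \sum_(i < size s) cs`_i *: s`_i)].

(* Formal completion of X at the k-point x, evaluated on (A, eps). *)
Definition hat (X : pfun) (k : fieldType) (x : pt X k)
    (A : comAlgType k) (eps : A -> k) (y : pt X A) : Prop :=
  ok y /\ bc eps y = x.

Definition surj_kpts (X Y : pfun) (f : forall R, pt X R -> pt Y R)
    (k : fieldType) : Prop :=
  forall y : pt Y k, ok y -> exists x : pt X k, ok x /\ f k x = y.

Definition fsmooth_hat (X Y : pfun) (f : forall R, pt X R -> pt Y R)
    (k : fieldType) (x : pt X k) : Prop :=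
  forall (A B : comAlgType k) (epsA : A -> k) (epsB : B -> k)
         (phi : {lrmorphism A -> B}),
    art_k epsA -> art_k epsB -> (forall b : B, exists a : A, phi a = b) ->
    forall (yB : pt X B) (zA : pt Y A),
      hat x epsB yB -> hat (f k x) epsA zA -> f B yB = bc phi zA ->
      exists yA : pt X A,
        [/\ hat x epsA yA, bc phi yA = yB & f A yA = zA].

Definition iso_hat (X Y : pfun) (f : forall R, pt X R -> pt Y R)
    (k : fieldType) (x : pt X k) : Prop :=
  forall (A : comAlgType k) (eps : A -> k), art_k eps ->
    [/\ (forall y : pt X A, hat x eps y -> hat (f k x) eps (f A y)),
        (forall y1 y2 : pt X A, hat x eps y1 -> hat x eps y2 ->
            f A y1 = f A y2 -> y1 = y2) &
        (forall z : pt Y A, hat (f k x) eps z ->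
            exists y : pt X A, hat x eps y /\ f A y = z)].

(* Power series R[[t]] as coefficient sequences, polynomials inside them. *)
Definition ser_add (R : comNzRingType) (f g : nat -> R) : nat -> R :=
  fun n => f n + g n.
Definition ser_mul (R : comNzRingType) (f g : nat -> R) : nat -> R :=
  fun n => \sum_(i < n.+1) f i * g (n - i)%N.
Definition ser_of_poly (R : comNzRingType) (p : {poly R}) : nat -> R :=
  fun n => p`_n.

Definition isQ (d : nat) (R : comNzRingType) (q : {poly R}) : Prop :=
  q \is monic /\ size q = d.+1.
Definition isA (d : nat) (R : comNzRingType) (a : {poly R}) : Prop :=
  (size a <= d)%N.
Definition isGm (R : comNzRingType) (u : nat -> R) : Prop :=
  exists w : R, u 0%N * w = 1.

Definition Xbeta (d : nat) : pfun := @PFun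
  (fun R => ({poly R} * (nat -> R) * {poly R} * (nat -> R))%type)
  (fun R x => let: (q, u, a, v) := x in [/\ isQ d q, isGm u & isA d a])
  (fun R S phi x => let: (q, u, a, v) := x in
     (map_poly phi q, phi \o u, map_poly phi a, phi \o v)).

Definition Ybeta (d : nat) : pfun := @PFun
  (fun R => ({poly R} * (nat -> R) * (nat -> R))%type)
  (fun R y => let: (q, u, w) := y in isQ d q /\ isGm u)
  (fun R S phi y => let: (q, u, w) := y in (map_poly phi q, phi \o u, phi \o w)).

Definition dbeta (d : nat) (R : comNzRingType) (x : pt (Xbeta d) R)
  : pt (Ybeta d) R :=
  let: (q, u, a, v) := x in
  (q, u, ser_add (ser_mul u (ser_of_poly a)) (ser_mul (ser_of_poly q) v)).

Definition Xalpha (d : nat) : pfun := @PFun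
  (fun R => ({poly R} * {poly R} * (nat -> R))%type)
  (fun R x => let: (q, a, v) := x in isQ d q /\ isA d a)
  (fun R S phi x => let: (q, a, v) := x in (map_poly phi q, map_poly phi a, phi \o v)).

Definition Yalpha (d : nat) : pfun := @PFun
  (fun R => ({poly R} * (nat -> R))%type)
  (fun R y => let: (q, w) := y in isQ d q)
  (fun R S phi y => let: (q, w) := y in (map_poly phi q, phi \o w)).

Definition alpha (d : nat) (R : comNzRingType) (x : pt (Xalpha d) R)
  : pt (Yalpha d) R :=
  let: (q, a, v) := x in (q, ser_add (ser_mul (ser_of_poly q) v) (ser_of_poly a)).

(* Main.v *)
Require Import Defs.
From Stdlib Require Import FunctionalExtensionality.
From HB Require Import structures.
From mathcomp Require Import all_boot all_order all_algebra zify ring.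
Set Implicit Arguments. Unset Strict Implicit. Unset Printing Implicit Defensive.
Import GRing.Theory.
Local Open Scope ring_scope.

Lemma fixpt (T : Type) (x0 : T) (G : (nat -> T) -> nat -> T) :
  (forall f g n, (forall i, (i < n)%N -> f i = g i) -> G f n = G g n) ->
  exists f, forall n, f n = G f n.
Proof.
move=> HG.
pose ap := fix ap (n : nat) : nat -> T :=
  match n with 0 => fun _ => x0 | S n => G (ap n) end.
have key : forall j i, (i < j)%N -> ap j i = ap i.+1 i.
  elim/ltn_ind=> j IH i lt_ij.
  case: j IH lt_ij => [|j] IH //= lt_ij.
  apply: HG => l lt_li.
  have -> : ap j l = ap l.+1 l by apply: IH => //; lia.
  by rewrite (IH i lt_ij l lt_li).
exists (fun i => ap i.+1 i) => n /=.
apply: HG => i lt_in; by rewrite key.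
Qed.

Section Ser.
Variable R : comNzRingType.
Implicit Types (u v : nat -> R) (q a : {poly R}) (I : R -> Prop).

Definition F u q v a n := ser_mul u (ser_of_poly a) n + ser_mul (ser_of_poly q) v n.

Definition idealP I := [/\ I 0, forall x y, I x -> I y -> I (x + y) &
   forall r x, I x -> I (r * x)].

Lemma idealN I x : idealP I -> I x -> I (- x).
Proof. by case=> _ _ HM Ix; rewrite -mulN1r; apply: HM. Qed.

Lemma idealD I x y : idealP I -> I x -> I y -> I (x + y).
Proof. by case=> _ HD _; apply: HD. Qed.

Lemma idealM I r x : idealP I -> I x -> I (r * x).
Proof. by case=> _ _ HM; apply: HM. Qed.

Lemma ideal0 I : idealP I -> I 0.
Proof. by case. Qed.

Lemma idealB I x y : idealP I -> I x -> I y -> I (x - y).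
Proof. by move=> HI Ix Iy; apply: idealD => //; apply: idealN. Qed.

Lemma ideal_sum I n (f : 'I_n -> R) : idealP I -> (forall i, I (f i)) ->
  I (\sum_(i < n) f i).
Proof.
move=> HI Hf; elim/big_ind: _ => //; first exact: ideal0.
by move=> x y; apply: idealD.
Qed.

Lemma ser_mulDr (f g h : nat -> R) n :
  ser_mul f (fun m => g m + h m) n = ser_mul f g n + ser_mul f h n.
Proof. by rewrite /ser_mul -big_split /=; apply: eq_bigr => i _; rewrite mulrDr. Qed.

Lemma ser_mulDl (f g h : nat -> R) n :
  ser_mul (fun m => g m + h m) f n = ser_mul g f n + ser_mul h f n.
Proof. by rewrite /ser_mul -big_split /=; apply: eq_bigr => i _; rewrite mulrDl. Qed.

Lemma ser_mul0r (f : nat -> R) n : ser_mul (fun _ => 0) f n = 0.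
Proof. by rewrite /ser_mul big1 // => i _; rewrite mul0r. Qed.

Lemma ser_mulr0 (f : nat -> R) n : ser_mul f (fun _ => 0) n = 0.
Proof. by rewrite /ser_mul big1 // => i _; rewrite mulr0. Qed.

Lemma F_add u q v1 v2 a1 a2 n :
  F u q (fun m => v1 m + v2 m) (a1 + a2) n = F u q v1 a1 n + F u q v2 a2 n.
Proof.
rewrite /F.
have -> : ser_of_poly (a1 + a2) = fun m => ser_of_poly a1 m + ser_of_poly a2 m.
  by apply: functional_extensionality => m; rewrite /ser_of_poly coefD.
rewrite ser_mulDr ser_mulDr; ring.
Qed.

Lemma F_zero u q n : F u q (fun _ => 0) 0 n = 0.
Proof.
rewrite /F ser_mulr0.
have -> : ser_of_poly (0 : {poly R}) = fun _ => 0.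
  by apply: functional_extensionality => m; rewrite /ser_of_poly coef0.
by rewrite ser_mulr0 addr0.
Qed.

Lemma ser_mul_delta (x : R) i v n :
  ser_mul (ser_of_poly (x *: 'X^i)) v n = if (i <= n)%N then x * v (n - i)%N else 0.
Proof.
rewrite /ser_mul /ser_of_poly.
rewrite (eq_bigr (fun j : 'I_n.+1 => if (j == i :> nat) then x * v (n - i)%N else 0)); last first.
  move=> j _; rewrite coefZ coefXn; case: eqP => [->|_]; first by rewrite mulr1.
  by rewrite mulr0 mul0r.
rewrite -big_mkcond /=.
by rewrite (big_ord1_eq _ (fun _ => x * v (n - i)%N)) ltnS.
Qed.

Lemma F_pert u q v a (x : R) i n :
  F u (q + x *: 'X^i) v a n = F u q v a n + (if (i <= n)%N then x * v (n - i)%N else 0).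
Proof.
rewrite /F -ser_mul_delta -addrA -ser_mulDl.
congr (_ + _); rewrite /ser_mul; apply: eq_bigr => j _.
by rewrite /ser_of_poly coefD.
Qed.

Lemma sum_split1 N i0 (f : nat -> R) : (i0 < N)%N ->
  \sum_(i < N) f i = f i0 + \sum_(i < N | (i : nat) != i0) f i.
Proof.
move=> lt; rewrite (bigD1 (Ordinal lt)) //=; congr (_ + _).
Qed.

Definition Solv u q d := forall I, idealP I -> forall e, (forall n, I (e n)) ->
  exists v a, [/\ forall n, I (v n), forall n, I a`_n, (size a <= d)%N &
                 forall n, F u q v a n = e n].

Lemma solv_base u q m d w0 wq : (m <= d)%N -> u 0%N * w0 = 1 ->
  (forall i, (i < m)%N -> q`_i = 0) -> q`_m * wq = 1 -> Solv u q d.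
Proof.
move=> le_md Hw0 Hq0 Hwq I HI e He.
pose G1 (al : nat -> R) n := w0 * (e n - \sum_(i < n) u i.+1 * al (n - i.+1)%N).
have [al Hal] : exists al, forall n, al n = G1 al n.
  apply: (fixpt 0) => f g n Hfg; rewrite /G1; congr (_ * (_ - _)).
  by apply: eq_bigr => i _; rewrite Hfg //; case: i => i /= lt; lia.
have Hual : forall n, ser_mul u al n = e n.
  move=> n; rewrite /ser_mul big_ord_recl subn0.
  have -> : u 0%N * al n = e n - \sum_(i < n) u i.+1 * al (n - i.+1)%N.
    by rewrite Hal /G1 mulrA Hw0 mul1r.
  rewrite -addrA addrC -addrA.
  have -> : \sum_(i < n) u (lift ord0 i) * al (n - lift ord0 i)%N =
            \sum_(i < n) u i.+1 * al (n - i.+1)%N by apply: eq_bigr => i _.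
  by rewrite addrA addNr add0r.
have Ial : forall n, I (al n).
  elim/ltn_ind=> n IH; rewrite Hal /G1; apply: idealM => //; apply: idealB => //.
  apply: ideal_sum => // i; apply: idealM => //; apply: IH; case: i => i /= lt; lia.
pose a := \poly_(i < m) al i.
have Ha : forall n, (n < m)%N -> ser_mul u (ser_of_poly a) n = e n.
  move=> n lt; rewrite -Hual /ser_mul; apply: eq_bigr => i _.
  rewrite /ser_of_poly coef_poly; case: ifP => // /negbT; case: i => i /= li; lia.
pose e' n := e n - ser_mul u (ser_of_poly a) n.
have Ia : forall n, I a`_n.
  by move=> n; rewrite coef_poly; case: ifP => _ //; exact: ideal0.
have Ie' : forall n, I (e' n).
  move=> n; apply: idealB => //; apply: ideal_sum => // i; apply: idealM => //.
  exact: Ia.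
pose G2 (v : nat -> R) j := wq * (e' (j + m)%N -
     \sum_(i < (j + m).+1 | (i : nat) != m) q`_i * v (j + m - i)%N).
have [v Hv] : exists v, forall n, v n = G2 v n.
  apply: (fixpt 0) => f g j Hfg; rewrite /G2; congr (_ * (_ - _)).
  apply: eq_bigr => -[i /= lt] ne.
  case: (ltnP i m) => him; first by rewrite Hq0 // !mul0r.
  by rewrite Hfg //; move: ne; rewrite neq_ltn; case/orP => h; lia.
have Iv : forall n, I (v n).
  elim/ltn_ind=> j IH; rewrite Hv /G2; apply: idealM => //; apply: idealB => //.
  rewrite big_mkcond /=; apply: ideal_sum => // -[i /= lt]; case: ifP => ne; last exact: ideal0.
  case: (ltnP i m) => him; first by rewrite Hq0 // mul0r; exact: ideal0.
  apply: idealM => //; apply: IH; move: ne; rewrite neq_ltn; case/orP => h; lia.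
exists v, a; split => //; first by apply: (leq_trans (size_poly _ _)).
move=> n; rewrite /F; case: (ltnP n m) => hnm.
  rewrite Ha // /ser_mul big1 ?addr0 // => -[i /= lt] _.
  by rewrite /ser_of_poly Hq0 ?mul0r //; lia.
have -> : ser_mul (ser_of_poly q) v n = e' n.
  have -> : n = ((n - m) + m)%N by lia.
  rewrite /ser_mul (sum_split1 (fun i => ser_of_poly q i * v ((n - m) + m - i)%N) (_ : m < ((n - m) + m).+1)%N); last by lia.
  rewrite [v (n - m + m - m)%N]Hv /G2 /ser_of_poly.
  have -> : (n - m + m - m = n - m)%N by lia.
  by rewrite mulrA Hwq mul1r subrK.
by rewrite /e' addrC subrK.
Qed.

Lemma solv_pert u q d x i p : x ^+ p = 0 -> Solv u q d -> Solv u (q + x *: 'X^i) d.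
Proof.
move=> Hx HS I HI.
pose J j z := exists y, I y /\ z = x ^+ j * y.
have HJ : forall j, idealP (J j).
  move=> j; split.
  - by exists 0; split; [exact: ideal0 | rewrite mulr0].
  - move=> _ _ [y1 [I1 ->]] [y2 [I2 ->]]; exists (y1 + y2); split; last by rewrite mulrDr.
    exact: idealD.
  - move=> r _ [y [Iy ->]]; exists (r * y); split; first exact: idealM.
    by rewrite mulrCA.
have Jsub : forall j z, J j.+1 z -> J j z.
  move=> j _ [y [Iy ->]]; exists (x * y); split; first exact: idealM.
  by rewrite exprS mulrCA mulrA.
have key : forall k j, (p <= j + k)%N -> forall e, (forall n, J j (e n)) ->
   exists v a, [/\ forall n, J j (v n), forall n, J j a`_n, (size a <= d)%N &
                forall n, F u (q + x *: 'X^i) v a n = e n].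
  elim=> [|k IH] j hp e He.
    exists (fun _ => 0), 0; split.
    - by move=> n; exact: ideal0.
    - by move=> n; rewrite coef0; exact: ideal0.
    - by rewrite size_poly0.
    - move=> n; rewrite F_zero; case: (He n) => y [_ ->].
      by rewrite -(subnKC (_ : p <= j)%N) ?exprD ?Hx ?mul0r //; lia.
  case: (HS (J j) (HJ j) e He) => v [a [Iv Ia Sa Fe]].
  pose e2 n := - (if (i <= n)%N then x * v (n - i)%N else 0).
  have Ie2 : forall n, J j.+1 (e2 n).
    move=> n; rewrite /e2; case: ifP => _; last by rewrite oppr0; exact: ideal0.
    case: (Iv (n - i)%N) => y [Iy ->]; exists (- y); split; first exact: idealN.
    by rewrite exprS mulrN mulrA.
  case: (IH j.+1 (_ : p <= j.+1 + k)%N e2 Ie2) => [|v' [a' [Iv' Ia' Sa' Fe']]]; first by lia.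
  exists (fun n => v n + v' n), (a + a'); split.
  - by move=> n; apply: idealD => //; apply: Jsub.
  - by move=> n; rewrite coefD; apply: idealD => //; apply: Jsub.
  - by rewrite (leq_trans (size_add _ _)) // geq_max Sa Sa'.
  - move=> n; rewrite F_add Fe' F_pert Fe /e2; by rewrite addrK.
move=> e He.
case: (key p 0%N (leqnn _) e) => [n|v [a [Iv Ia Sa Fe]]].
  by exists (e n); rewrite expr0 mul1r.
exists v, a; split => //.
- by move=> n; case: (Iv n) => y [Iy ->]; rewrite expr0 mul1r.
- by move=> n; case: (Ia n) => y [Iy ->]; rewrite expr0 mul1r.
Qed.

Definition Uniq u q d := forall I, idealP I -> forall v a, (size a <= d)%N ->
  (forall n, I (F u q v a n)) -> (forall n, I (v n)) /\ (forall n, I a`_n).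

Lemma uniq_base u d w0 : u 0%N * w0 = 1 -> Uniq u 'X^d d.
Proof.
move=> Hw0 I HI v a Sa H.
have Ia : forall n, I a`_n.
  elim/ltn_ind=> n IH; case: (ltnP n d) => hn; last first.
    by rewrite nth_default ?(leq_trans Sa) //; exact: ideal0.
  have := H n; rewrite /F.
  have -> : ser_mul (ser_of_poly 'X^d) v n = 0.
    rewrite /ser_mul big1 // => -[i /= li] _; rewrite /ser_of_poly coefXn.
    by case: eqP => [eid|_]; [lia | rewrite mul0r].
  rewrite addr0 /ser_mul big_ord_recl subn0 /ser_of_poly => Hn.
  have -> : a`_n = w0 * (u 0%N * a`_n) by rewrite mulrA (mulrC w0) Hw0 mul1r.
  apply: idealM => //.
  rewrite -(addrK (\sum_(i < n) u (lift ord0 i) * a`_(n - lift ord0 i)) (u 0%N * a`_n)).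
  apply: idealB => //; apply: ideal_sum => // i; apply: idealM => //; apply: IH.
  by case: i => i /= li; rewrite /bump /=; lia.
split => // j.
have := H (j + d)%N; rewrite /F.
have -> : ser_mul (ser_of_poly 'X^d) v (j + d) = v j.
  rewrite /ser_mul (sum_split1 (fun i => ser_of_poly 'X^d i * v (j + d - i)%N) (_ : d < (j + d).+1)%N); last by lia.
  rewrite big1 ?addr0; last first.
    by move=> i ne; rewrite /ser_of_poly coefXn (negbTE ne) mul0r.
  by rewrite /ser_of_poly coefXn eqxx mul1r addnK.
move=> Hj; rewrite -(addKr (ser_mul u (ser_of_poly a) (j + d)) (v j)).
apply: idealD => //; apply: idealN => //; apply: ideal_sum => // i; apply: idealM => //; exact: Ia.
Qed.

Lemma uniq_pert u q d x i p : x ^+ p = 0 -> Uniq u q d -> Uniq u (q + x *: 'X^i) d.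
Proof.
move=> Hx HU I HI v a Sa H.
pose K j z := exists y w, I y /\ z = y + x ^+ j * w.
have HK : forall j, idealP (K j).
  move=> j; split.
  - by exists 0, 0; split; [exact: ideal0 | rewrite mulr0 addr0].
  - move=> _ _ [y1 [w1 [I1 ->]]] [y2 [w2 [I2 ->]]]; exists (y1 + y2), (w1 + w2).
    by split; [exact: idealD | rewrite mulrDr; ring].
  - move=> r _ [y [w [Iy ->]]]; exists (r * y), (r * w); split; first exact: idealM.
    by rewrite mulrDr mulrCA.
have IK : forall j z, I z -> K j z.
  by move=> j z Iz; exists z, 0; rewrite mulr0 addr0.
have key : forall j, (forall n, K j (v n)) /\ (forall n, K j a`_n).
  elim=> [|j [IHv IHa]].
    split=> n; [exists 0, (v n) | exists 0, a`_n]; rewrite expr0 mul1r add0r;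
      by split => //; exact: ideal0.
  apply: (HU (K j.+1) (HK j.+1) v a Sa) => n.
  have -> : F u q v a n = F u (q + x *: 'X^i) v a n - (if (i <= n)%N then x * v (n - i)%N else 0).
    by rewrite F_pert addrK.
  apply: idealB => //; first exact: IK.
  case: ifP => _; last exact: ideal0.
  case: (IHv (n - i)%N) => y [w [Iy ->]]; exists (x * y), w; split; first exact: idealM.
  by rewrite mulrDr exprS mulrA.
case: (key p) => Kv Ka; split=> n.
- by case: (Kv n) => y [w [Iy ->]]; rewrite Hx mul0r addr0.
- by case: (Ka n) => y [w [Iy ->]]; rewrite Hx mul0r addr0.
Qed.

Lemma pert_ind (P : {poly R} -> Prop) q0 m (c : nat -> R) : P q0 ->
  (forall q i, (i < m)%N -> P q -> P (q + c i *: 'X^i)) ->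
  P (q0 + \sum_(i < m) c i *: 'X^i).
Proof.
move=> H0 HS.
suff : forall j, (j <= m)%N -> P (q0 + \sum_(i < j) c i *: 'X^i) by apply.
elim=> [|j IH] lt; first by rewrite big_ord0 addr0.
by rewrite big_ord_recr /= addrA; apply: HS => //; apply: IH; lia.
Qed.

Lemma coef_sumX m (c : nat -> R) n :
  (\sum_(i < m) c i *: 'X^i)`_n = if (n < m)%N then c n else 0.
Proof.
rewrite coef_sum.
rewrite (eq_bigr (fun i : 'I_m => if (i == n :> nat) then c n else 0)); last first.
  move=> i _; rewrite coefZ coefXn eq_sym; case: eqP => [->|_]; first by rewrite mulr1.
  by rewrite mulr0.
by rewrite -big_mkcond /= (big_ord1_eq _ (fun _ => c n)).
Qed.

Lemma solv_gen u q m d w0 wq : (m <= d)%N -> u 0%N * w0 = 1 ->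
  (forall i, (i < m)%N -> exists p, q`_i ^+ p = 0) -> q`_m * wq = 1 -> Solv u q d.
Proof.
move=> le Hw0 Hnil Hwq.
pose q0 := q - \sum_(i < m) q`_i *: 'X^i.
have -> : q = q0 + \sum_(i < m) q`_i *: 'X^i by rewrite subrK.
apply: (pert_ind (P := fun r => Solv u r d)).
  apply: (solv_base le Hw0 (wq := wq)).
    by move=> i lt; rewrite /q0 coefB coef_sumX lt subrr.
  by rewrite /q0 coefB coef_sumX ltnn subr0.
move=> q' i lt HS; case: (Hnil i lt) => p Hp.
exact: (@solv_pert u q' d _ i p Hp HS).
Qed.

Lemma uniq_gen u q d w0 : u 0%N * w0 = 1 -> q \is monic -> size q = d.+1 ->
  (forall i, (i < d)%N -> exists p, q`_i ^+ p = 0) -> Uniq u q d.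
Proof.
move=> Hw0 Hm Hs Hnil.
have -> : q = 'X^d + \sum_(i < d) q`_i *: 'X^i.
  apply/polyP => n; rewrite coefD coef_sumX coefXn.
  case: (ltngtP n d) => h.
  - by rewrite add0r.
  - by rewrite addr0 nth_default ?Hs.
  - by rewrite addr0 h; move/monicP: Hm; rewrite lead_coefE Hs.
apply: (pert_ind (P := fun r => Uniq u r d)); first exact: (@uniq_base u d w0 Hw0).
move=> q' i lt HS; case: (Hnil i lt) => p Hp; exact: (@uniq_pert u q' d _ i p Hp HS).
Qed.

End Ser.

Definition rm (R S : comNzRingType) (f : R -> S) :=
  [/\ f 0 = 0, forall a b, f (a + b) = f a + f b,
      forall a b, f (a * b) = f a * f b & f 1 = 1].

Section RM.
Variables (R S : comNzRingType) (f : R -> S).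
Hypothesis hf : rm f.

Lemma rm0 : f 0 = 0. Proof. by case: hf. Qed.
Lemma rmD a b : f (a + b) = f a + f b. Proof. by case: hf. Qed.
Lemma rmM a b : f (a * b) = f a * f b. Proof. by case: hf. Qed.
Lemma rm1 : f 1 = 1. Proof. by case: hf. Qed.
Lemma rmN a : f (- a) = - f a.
Proof. by apply/eqP; rewrite -subr_eq0 opprK -rmD addNr rm0. Qed.
Lemma rmB a b : f (a - b) = f a - f b.
Proof. by rewrite rmD rmN. Qed.
Lemma rmX a n : f (a ^+ n) = f a ^+ n.
Proof. by elim: n => [|n IH]; rewrite ?expr0 ?rm1 // !exprS rmM IH. Qed.

Lemma rm_ser (g h : nat -> R) n : f (ser_mul g h n) = ser_mul (f \o g) (f \o h) n.
Proof.
rewrite /ser_mul (big_morph f rmD rm0); apply: eq_bigr => i _; exact: rmM.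
Qed.

Lemma rm_coef (p : {poly R}) n : (map_poly f p)`_n = f p`_n.
Proof. by rewrite coef_map_id0 // rm0. Qed.

Lemma rm_F u q v a n :
  f (F u q v a n) = F (f \o u) (map_poly f q) (f \o v) (map_poly f a) n.
Proof.
rewrite /F rmD !rm_ser; congr (_ + _); rewrite /ser_mul; apply: eq_bigr => i _;
  by rewrite /ser_of_poly /= rm_coef.
Qed.

Lemma rm_size (p : {poly R}) d : (size p <= d)%N -> (size (map_poly f p) <= d)%N.
Proof.
move=> H; apply/leq_sizeP => j hj; rewrite rm_coef nth_default ?rm0 //.
exact: leq_trans H hj.
Qed.
End RM.

Lemma rm_rmorph (R S : comNzRingType) (phi : {rmorphism R -> S}) : rm phi.
Proof. by split; [exact: rmorph0 | exact: rmorphD | exact: rmorphM | exact: rmorph1]. Qed.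

Lemma rm_art (k : fieldType) (A : comAlgType k) (eps : A -> k) : art_k eps -> rm eps.
Proof.
case=> [[HD HM] H1 _ _ _]; split => //.
by move: (HD 0 0); rewrite addr0 => /(congr1 (fun x => x - eps 0)); rewrite subrr addrK.
Qed.

Lemma art_nil (k : fieldType) (A : comAlgType k) (eps : A -> k) a :
  art_k eps -> eps a = 0 -> exists p, a ^+ p = 0.
Proof. by case=> _ _ _ H _; apply: H. Qed.

Lemma art_Z (k : fieldType) (A : comAlgType k) (eps : A -> k) c a :
  art_k eps -> eps (c *: a) = c * eps a.
Proof. by case=> _ _ H _ _; apply: H. Qed.

Lemma art_unit (k : fieldType) (A : comAlgType k) (eps : A -> k) a :
  art_k eps -> eps a != 0 -> exists w, a * w = 1.
Proof.
move=> ha hne; have hr := rm_art ha.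
set c := eps a.
pose y := a - c *: 1.
have ey : eps y = 0 by rewrite /y (rmB hr) (art_Z _ _ ha) (rm1 hr) mulr1 subrr.
case: (art_nil ha ey) => p hp.
pose z := - (c^-1 *: y).
have az : a = c *: (1 - z).
  by rewrite /z opprK scalerDr scalerA mulfV // scale1r /y addrC subrK.
exists (c^-1 *: \sum_(j < p) z ^+ j).
rewrite az -scalerAl scalerAr scalerA mulfV // scale1r.
have : z ^+ p - 1 = (z - 1) * \sum_(i < p) z ^+ i by rewrite subrX1.
have -> : z ^+ p = 0 by rewrite /z exprNn exprZn hp !scaler0 mulr0.
by move=> h; rewrite -opprB mulNr -h add0r opprK.
Qed.

Lemma eps_comp (k : fieldType) (A B : comAlgType k) (epsA : A -> k) (epsB : B -> k)
  (phi : {lrmorphism A -> B}) : art_k epsA -> art_k epsB ->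
  forall a, epsB (phi a) = epsA a.
Proof.
move=> hA hB a; have rA := rm_art hA; have rB := rm_art hB.
pose y := a - epsA a *: 1.
have ey : epsA y = 0 by rewrite /y (rmB rA) (art_Z _ _ hA) (rm1 rA) mulr1 subrr.
case: (art_nil hA ey) => p hp.
have : epsB (phi y) ^+ p = 0 by rewrite -(rmX rB) -rmorphXn hp rmorph0 (rm0 rB).
move/eqP; rewrite expf_eq0 => /andP [hp0 /eqP].
have hz : phi (epsA a *: 1) = epsA a *: 1 by rewrite linearZ_LR rmorph1.
have -> : phi y = phi a - epsA a *: 1 by rewrite /y rmorphB; congr (_ - _); exact: hz.
rewrite (rmB rB) (art_Z _ _ hB) (rm1 rB) mulr1.
by move/eqP; rewrite subr_eq0 => /eqP.
Qed.

Lemma idealT (R : comNzRingType) : idealP (fun _ : R => True).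
Proof. by split. Qed.

Lemma ideal_ker (R S : comNzRingType) (phi : {rmorphism R -> S}) :
  idealP (fun z => phi z = 0).
Proof.
split; first exact: rmorph0.
- by move=> x y hx hy; rewrite rmorphD hx hy addr0.
- by move=> r x hx; rewrite rmorphM hx mulr0.
Qed.

Lemma lift_core (R S : comNzRingType) (phi : {rmorphism R -> S})
  (surj : forall b, exists a, phi a = b) d (u : nat -> R) (q : {poly R})
  (w : nat -> R) (vB : nat -> S) (aB : {poly S}) :
  Solv u q d -> (size aB <= d)%N ->
  (forall n, F (phi \o u) (map_poly phi q) vB aB n = phi (w n)) ->
  exists (v : nat -> R) (a : {poly R}), [/\ (size a <= d)%N, map_poly phi a = aB,
                 forall n, phi (v n) = vB n & forall n, F u q v a n = w n].
Proof.
move=> HS Sa HF.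
have hp := rm_rmorph phi.
have surj' : forall b, exists a, phi a == b.
  by move=> b; case: (surj b) => a ha; exists a; rewrite ha.
pose lift b := xchoose (surj' b).
have hl : forall b, phi (lift b) = b by move=> b; apply/eqP; exact: (xchooseP (surj' b)).
pose v' n := lift (vB n).
pose a' := \poly_(i < d) lift aB`_i.
have ma' : map_poly phi a' = aB.
  apply/polyP => i; rewrite (rm_coef hp) coef_poly; case: ifP => hi; first exact: hl.
  by rewrite rmorph0 nth_default // (leq_trans Sa) // leqNgt hi.
have fv' : phi \o v' = vB by apply: functional_extensionality => n; exact: hl.
pose e n := w n - F u q v' a' n.
have He : forall n, phi (e n) = 0.
  by move=> n; rewrite /e rmorphB (rm_F hp) fv' ma' HF subrr.
case: (HS _ (ideal_ker phi) e He) => dv [da [Idv Ida Sda Fd]].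
exists (fun n => v' n + dv n), (a' + da); split.
- by rewrite (leq_trans (size_polyD _ _)) // geq_max Sda (leq_trans (size_poly _ _)).
- apply/polyP => i; rewrite (rm_coef hp) coefD rmorphD Ida addr0 -(rm_coef hp) ma' //.
- by move=> n; rewrite rmorphD Idv addr0 hl.
- by move=> n; rewrite F_add Fd /e addrC subrK.
Qed.

Lemma lowest (k : fieldType) d (q : {poly k}) : isQ d q ->
  exists m, [/\ (m <= d)%N, q`_m != 0 & forall i, (i < m)%N -> q`_i = 0].
Proof.
case=> hm hs.
have hd : q`_d != 0.
  by move/monicP: hm; rewrite lead_coefE hs /= => ->; exact: oner_neq0.
have ex : exists i, q`_i != 0 by exists d.
case: (ex_minnP ex) => m hm0 hmin; exists m; split => //.
- exact: hmin.
- move=> i hi; apply/eqP; apply: contraTT hi => hne; rewrite -leqNgt; exact: hmin.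
Qed.

Lemma solv_field (k : fieldType) d (q : {poly k}) (u : nat -> k) :
  isQ d q -> (exists w, u 0%N * w = 1) -> Solv u q d.
Proof.
move=> hQ [w0 hw0]; case: (lowest hQ) => m [hmd hm0 hlow].
apply: (solv_gen hmd hw0 (wq := (q`_m)^-1)); last exact: mulfV.
by move=> i hi; exists 1%N; rewrite expr1 hlow.
Qed.

Lemma solv_hat (k : fieldType) (A : comAlgType k) (eps : A -> k) d
  (u : nat -> A) (qA : {poly A}) (qx : {poly k}) :
  art_k eps -> isQ d qx -> map_poly eps qA = qx -> (exists w, u 0%N * w = 1) ->
  Solv u qA d.
Proof.
move=> ha hQ hq [w0 hw0]; have hr := rm_art ha.
case: (lowest hQ) => m [hmd hm0 hlow].
have hc : forall i, eps qA`_i = qx`_i by move=> i; rewrite -hq (rm_coef hr).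
case: (art_unit ha (_ : eps qA`_m != 0)) => [|wq hwq]; first by rewrite hc.
apply: (solv_gen hmd hw0 (wq := wq)) => // i hi.
by apply: (art_nil ha); rewrite hc hlow.
Qed.

Lemma uniq_eq (R : comNzRingType) (u : nat -> R) (q : {poly R}) d :
  Uniq u q d -> forall (v1 : nat -> R) (a1 : {poly R}) (v2 : nat -> R) (a2 : {poly R}), (size a1 <= d)%N -> (size a2 <= d)%N ->
  (forall n, F u q v1 a1 n = F u q v2 a2 n) -> v1 = v2 /\ a1 = a2.
Proof.
move=> HU v1 a1 v2 a2 s1 s2 HF.
pose I := fun z : R => z = 0.
have HI : idealP I.
  split; rewrite /I => //.
  - by move=> x y -> ->; rewrite addr0.
  - by move=> r x ->; rewrite mulr0.
have hs : (size (a1 - a2)%R <= d)%N.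
  by rewrite (leq_trans (size_polyD _ _)) // geq_max s1 size_polyN s2.
have H0 : forall n, I (F u q (fun n => v1 n - v2 n) (a1 - a2) n).
  move=> n; rewrite /I; apply: (@addrI _ (F u q v2 a2 n)).
  rewrite -F_add addr0.
  have -> : (fun m => v2 m + (v1 m - v2 m)) = v1.
    by apply: functional_extensionality => m; rewrite addrC subrK.
  by rewrite addrC subrK HF.
case: (HU I HI _ _ hs H0) => hv ha; split.
- by apply: functional_extensionality => m; apply: subr0_eq; exact: hv.
- by apply/polyP => i; apply: subr0_eq; rewrite -coefB; exact: ha.
Qed.

Lemma uniq_hat (k : fieldType) (A : comAlgType k) (eps : A -> k) d
  (u : nat -> A) (qA : {poly A}) :
  art_k eps -> isQ d qA -> map_poly eps qA = 'X^d -> (exists w, u 0%N * w = 1) ->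
  Uniq u qA d.
Proof.
move=> ha [hm hs] hq [w0 hw0]; have hr := rm_art ha.
apply: (uniq_gen hw0 hm hs) => i hi; apply: (art_nil ha).
by rewrite -(rm_coef hr) hq coefXn; case: eqP => // h; move: hi; rewrite h ltnn.
Qed.

Lemma isQ_Xn (R : comNzRingType) d : isQ d ('X^d : {poly R}).
Proof. by split; [exact: monicXn | exact: size_polyXn]. Qed.

Lemma dbeta_bc (R S : comNzRingType) (f : R -> S) d (y : pt (Xbeta d) R) :
  rm f -> bc f (dbeta y) = dbeta (bc f y).
Proof.
move=> hf; case: y => [[[q u] a] v] /=; congr (_, _).
by apply: functional_extensionality => n; exact: (rm_F hf).
Qed.

Lemma dbeta_surj (k : fieldType) d : surj_kpts (@dbeta d) k.
Proof.
move=> [[q u] w] /= [hQ hG].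
case: (solv_field hQ hG (@idealT k) (e := w)) => // v [a [_ _ Sa Fe]].
exists (q, u, a, v); split => //=; congr (_, _).
by apply: functional_extensionality => n; exact: Fe.
Qed.

Lemma dbeta_smooth (k : fieldType) d (x : pt (Xbeta d) k) :
  ok x -> fsmooth_hat (@dbeta d) x.
Proof.
move: x => [[[q0 u0] a0] v0] /= [hQ0 hG0 hA0] A B epsA epsB phi hA hB surj
  [[[qB uB] aB] vB] [[qA uA] wA].
rewrite /hat /=.
move=> [[hQB hGB hAB] [eqq equ eqa eqv]] [[hQA hGA] [eqqA equA eqwA]] [eq1 eq2 eq3].
subst qB uB.
have rA := rm_art hA; have rB := rm_art hB; have rp := rm_rmorph phi.
have HS : Solv uA qA d := solv_hat hA hQ0 eqqA hGA.
have HF : forall n, F (phi \o uA) (map_poly phi qA) vB aB n = phi (wA n).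
  by move=> n; exact: (congr1 (fun f => f n) eq3).
case: (lift_core surj HS hAB HF) => vA [aA [SaA maA pvA FA]].
exists (qA, uA, aA, vA); split.
- split => //=; rewrite eqqA equA; congr (_, _, _, _).
  + rewrite -eqa -maA; apply/polyP => i.
    by rewrite !(rm_coef rA, rm_coef rB, rm_coef rp) (eps_comp phi hA hB).
  + rewrite -eqv; apply: functional_extensionality => n /=.
    by rewrite -pvA (eps_comp phi hA hB).
- rewrite /= maA; congr (_, _).
  by apply: functional_extensionality => n; exact: pvA.
- rewrite /=; congr (_, _).
  by apply: functional_extensionality => n; exact: FA.
Qed.

Lemma dbeta_iso (k : fieldType) d (x : pt (Xbeta d) k) :
  ok x -> x.1.1.1 = 'X^d -> iso_hat (@dbeta d) x.
Proof.
move: x => [[[q0 u0] a0] v0] /= [hQ0 hG0 hA0] hq0 A eps hA; subst q0.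
have rA := rm_art hA.
split.
- move=> y [hy ey]; split; last by rewrite dbeta_bc // ey.
  by clear ey; move: y hy => [[[q u] a] v] [? ? ?]; split.
- move=> [[[q1 u1] a1] v1] [[[q2 u2] a2] v2] [[hQ1 hG1 hA1] e1] [[hQ2 hG2 hA2] e2] /=.
  case=> eq_q eq_u eqF; subst q2 u2.
  case: e1 => hq1 _ _ _.
  have HU : Uniq u1 q1 d := uniq_hat hA hQ1 hq1 hG1.
  have [-> ->] := uniq_eq HU hA1 hA2 (fun n => congr1 (fun f => f n) eqF).
  by [].
- move=> [[qA uA] wA] [[hQA hGA] ez]; case: ez => eqq equ eqw.
  have HS : Solv uA qA d := solv_hat hA (isQ_Xn _ d) eqq hGA.
  case: (HS _ (@idealT A) wA) => // v [a [_ _ Sa Fe]].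
  exists (qA, uA, a, v); split; last first.
    rewrite /=; congr (_, _).
    by apply: functional_extensionality => n; exact: Fe.
  split; first by split.
  rewrite /= eqq equ.
  have [w0 hw0] := hG0.
  have HU : Uniq u0 'X^d d := @uniq_base k u0 d w0 hw0.
  have HF : forall n, F u0 'X^d (eps \o v) (map_poly eps a) n = F u0 'X^d v0 a0 n.
    move=> n; have := congr1 (fun f => f n) eqw.
    by rewrite /= -Fe (rm_F rA) equ eqq => ->.
  by have [-> ->] := uniq_eq HU (rm_size rA Sa) hA0 HF.
Qed.

Definition one (R : comNzRingType) : nat -> R := fun n => if n == 0%N then 1 else 0.

Lemma one_unit (R : comNzRingType) : exists w : R, one R 0%N * w = 1.
Proof. by exists 1; rewrite /one eqxx mulr1. Qed.

Lemma ser_mul_one (R : comNzRingType) (g : nat -> R) n : ser_mul (one R) g n = g n.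
Proof.
rewrite /ser_mul big_ord_recl /one eqxx mul1r subn0 big1 ?addr0 //.
by move=> i _; rewrite /= mul0r.
Qed.

Lemma alpha_F (R : comNzRingType) (q : {poly R}) v a :
  ser_add (ser_mul (ser_of_poly q) v) (ser_of_poly a) = fun n => F (one R) q v a n.
Proof.
by apply: functional_extensionality => n; rewrite /ser_add /F ser_mul_one addrC.
Qed.

Lemma rm_one (R S : comNzRingType) (f : R -> S) : rm f -> f \o one R = one S.
Proof.
move=> hf; apply: functional_extensionality => n; rewrite /one /=.
by case: eqP => _; [exact: rm1 | exact: rm0].
Qed.

Lemma alpha_bc (R S : comNzRingType) (f : R -> S) d (y : pt (Xalpha d) R) :
  rm f -> bc f (alpha y) = alpha (bc f y).
Proof.
move=> hf; case: y => [[q a] v] /=; rewrite !alpha_F; congr (_, _).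
by apply: functional_extensionality => n /=; rewrite (rm_F hf) (rm_one hf).
Qed.

Lemma alpha_surj (k : fieldType) d : surj_kpts (@alpha d) k.
Proof.
move=> [q w] /= hQ.
case: (solv_field hQ (one_unit k) (@idealT k) (e := w)) => // v [a [_ _ Sa Fe]].
exists (q, a, v); split => //=; rewrite alpha_F; congr (_, _).
by apply: functional_extensionality => n; exact: Fe.
Qed.

Lemma alpha_smooth (k : fieldType) d (x : pt (Xalpha d) k) :
  ok x -> fsmooth_hat (@alpha d) x.
Proof.
move: x => [[q0 a0] v0] /= [hQ0 hA0] A B epsA epsB phi hA hB surj
  [[qB aB] vB] [qA wA].
rewrite /hat /=.
move=> [[hQB hAB] [eqq eqa eqv]] [hQA [eqqA eqwA]].
rewrite alpha_F => -[eq1 eq3].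
subst qB.
have rA := rm_art hA; have rB := rm_art hB; have rp := rm_rmorph phi.
have HS : Solv (one A) qA d := solv_hat hA hQ0 eqqA (one_unit A).
have HF : forall n, F (phi \o one A) (map_poly phi qA) vB aB n = phi (wA n).
  by move=> n; rewrite (rm_one rp); exact: (congr1 (fun f => f n) eq3).
case: (lift_core surj HS hAB HF) => vA [aA [SaA maA pvA FA]].
exists (qA, aA, vA); split.
- split => //=; rewrite eqqA; congr (_, _, _).
  + rewrite -eqa -maA; apply/polyP => i.
    by rewrite !(rm_coef rA, rm_coef rB, rm_coef rp) (eps_comp phi hA hB).
  + rewrite -eqv; apply: functional_extensionality => n /=.
    by rewrite -pvA (eps_comp phi hA hB).
- rewrite /= maA; congr (_, _).
  by apply: functional_extensionality => n; exact: pvA.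
- rewrite /= alpha_F; congr (_, _).
  by apply: functional_extensionality => n; exact: FA.
Qed.

Lemma alpha_iso (k : fieldType) d (x : pt (Xalpha d) k) :
  ok x -> x.1.1 = 'X^d -> iso_hat (@alpha d) x.
Proof.
move: x => [[q0 a0] v0] /= [hQ0 hA0] hq0 A eps hA; subst q0.
have rA := rm_art hA.
split.
- move=> y [hy ey]; split; last by rewrite alpha_bc // ey.
  by clear ey; move: y hy => [[q a] v] [? ?].
- move=> [[q1 a1] v1] [[q2 a2] v2] [[hQ1 hA1] e1] [[hQ2 hA2] e2] /=.
  rewrite !alpha_F; case=> eq_q eqF; subst q2.
  case: e1 => hq1 _ _.
  have HU : Uniq (one A) q1 d := uniq_hat hA hQ1 hq1 (one_unit A).
  have [-> ->] := uniq_eq HU hA1 hA2 (fun n => congr1 (fun f => f n) eqF).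
  by [].
- move=> [qA wA] [hQA ez]; case: ez => eqq; rewrite alpha_F => eqw.
  have HS : Solv (one A) qA d := solv_hat hA (isQ_Xn _ d) eqq (one_unit A).
  case: (HS _ (@idealT A) wA) => // v [a [_ _ Sa Fe]].
  exists (qA, a, v); split; last first.
    rewrite /= alpha_F; congr (_, _).
    by apply: functional_extensionality => n; exact: Fe.
  split; first by split.
  rewrite /= eqq.
  have HU : Uniq (one k) 'X^d d.
    by apply: (@uniq_base k (one k) d 1); rewrite /one eqxx mulr1.
  have HF : forall n, F (one k) 'X^d (eps \o v) (map_poly eps a) n = F (one k) 'X^d v0 a0 n.
    move=> n; have := congr1 (fun f => f n) eqw.
    by rewrite /= -Fe (rm_F rA) (rm_one rA) eqq => ->.
  by have [-> ->] := uniq_eq HU (rm_size rA Sa) hA0 HF.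
Qed.

Unset Implicit Arguments.

Theorem proposition4p1 (k : fieldType) (d : nat) :
  (surj_kpts (@dbeta d) k
   /\ (forall x : pt (Xbeta d) k, ok x -> fsmooth_hat (@dbeta d) x)
   /\ (forall x : pt (Xbeta d) k, ok x -> x.1.1.1 = 'X^d ->
         iso_hat (@dbeta d) x))
  /\
  (surj_kpts (@alpha d) k
   /\ (forall x : pt (Xalpha d) k, ok x -> fsmooth_hat (@alpha d) x)
   /\ (forall x : pt (Xalpha d) k, ok x -> x.1.1 = 'X^d ->
         iso_hat (@alpha d) x)).
Proof.
split; split; [exact: dbeta_surj | split | exact: alpha_surj | split].
- by move=> x hx; exact: dbeta_smooth.
- by move=> x hx hq; exact: dbeta_iso.
- by move=> x hx; exact: alpha_smooth.
- by move=> x hx hq; exact: alpha_iso.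
Qed.
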